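(* Let $\pi$ be an irreducible $\psi$-generic representation of $\mathrm{SO}_{2l}$ and let $W\in\mathcal W(\pi,\psi)$ with $W(I_{2l})=1$. Then $W_m\in\mathcal W(\pi,\psi)$ for every integer $m\ge1$.
   Context: $F$ is a non-Archimedean local field of characteristic $0$, with maximal ideal $\mathfrak p$, uniformizer $\varpi$, and a nontrivial unramified additive character $\psi$. $J_n$ is the antidiagonal matrix of $1$'s. $\rho\in F^\times$ is a non-square, and $J_{2l,\rho}=\mathrm{diag}(I_{l-1},\begin{pmatrix}0&1\\-\rho&0\end{pmatrix},I_{l-1})J_{2l}$. Then $\mathrm{SO}_{2l}=\{g\in\mathrm{GL}_{2l}(F):\det g=1,{}^tgJ_{2l,\rho}g=J_{2l,\rho}\}$, with upper unipotent subgroup $U$ and generic character $\psi(u)=\psi(\sum_{i=1}^{l-2}u_{i,i+1}+\frac12u_{l-1,l+1})$. $\pi$ is $\psi$-generic if $\mathrm{Hom}_U(\pi,\psi)\ne0$. For a fixed nonzero $\Gamma$ in this space, $\mathcal W(\pi,\psi)=\{g\mapsto\Gamma(\pi(g)v):v\in\pi\}$. Let $K_m=(I_{2l}+\mathrm{Mat}_{2l}(\mathfrak p^m))\cap\mathrm{SO}_{2l}$, $\tau_m(k)=\psi(\varpi^{-2m}(\sum_{i=1}^{l-2}k_{i,i+1}+\frac12k_{l-1,l+1}))$, $e_m=\mathrm{diag}(\varpi^{-2m(l-1)},\dots,\varpi^{-2m},1,1,\varpi^{2m},\dots,\varpi^{2m(l-1)})$, $H_m=e_mK_me_m^{-1}$,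 $\psi_m(h)=\tau_m(e_m^{-1}he_m)$ and $U_m=U\cap H_m$. Then $W_m(g)=\mathrm{Vol}(U_m)^{-1}\int_{U_m}\psi_m^{-1}(u)W(gu)du$. *)

(* Defs.v *)
From HB Require Import structures.
From mathcomp Require Import all_boot all_order all_algebra.
From mathcomp Require Import complex reals.
Set Implicit Arguments. Unset Strict Implicit. Unset Printing Implicit Defensive.
Import Order.TTheory GRing.Theory Num.Theory.
Local Open Scope ring_scope.

(* ord x is the valuation of x (its value at 0 is irrelevant).         *)
Section LocalField.
Variable F : fieldType.
Variable ord : F -> int.

Definition inPow (m : int) (x : F) : Prop := x = 0 \/ m <= ord x.
Definition inO (x : F) : Prop := inPow 0 x.

Definition is_discrete_valuation : Prop :=
  (forall x y, x != 0 -> y != 0 -> ord (x * y) = ord x + ord y) /\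
  (forall x y, x != 0 -> y != 0 -> x + y != 0 ->
      Num.min (ord x) (ord y) <= ord (x + y)) /\
  (exists w : F, w != 0 /\ ord w = 1).

Definition finite_residue_field : Prop :=
  exists s : seq F, (forall y, y \in s -> inO y) /\
    forall x, inO x -> exists2 y, y \in s & inPow 1 (x - y).

Definition complete_field : Prop :=
  forall a : nat -> F,
    (forall N : int, exists M, forall n k, (M <= n)%N -> (M <= k)%N -> inPow N (a n - a k)) ->
    exists L, forall N : int, exists M, forall n, (M <= n)%N -> inPow N (a n - L).

Definition nonarch_local_field_char0 : Prop :=
  is_discrete_valuation /\ finite_residue_field /\ complete_field /\ [pchar F] =i pred0.

Definition uniformizer (w : F) : Prop := w != 0 /\ ord w = 1.

Definition unram_add_char (C : fieldType) (psi : F -> C) : Prop :=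
  (forall x y, psi (x + y) = psi x * psi y) /\
  (forall x, inO x -> psi x = 1) /\
  (exists x, inPow (-1) x /\ psi x != 1).

Definition nonsquare (rho : F) : Prop := rho != 0 /\ ~ exists x, x * x = rho.
End LocalField.

(* The quasi-split group SO_{2l} (0-based matrix indices).             *)
Section SO.
Variable F : fieldType.
Variable l : nat.
Notation n := (l.*2).

Definition Jmat : 'M[F]_n := \matrix_(i, j) (((i + j)%N == n.-1)%:R).
(* diag(I_{l-1}, [[0,1],[-rho,0]], I_{l-1}) *)
Definition Dmat (rho : F) : 'M[F]_n := \matrix_(i, j)
  (if (i == j :> nat) && (((i < l.-1)%N) || ((l < i)%N)) then 1
   else if (i == l.-1 :> nat) && (j == l :> nat) then 1
   else if (i == l :> nat) && (j == l.-1 :> nat) then - rho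
   else 0).
Definition Jrho (rho : F) : 'M[F]_n := Dmat rho *m Jmat.

Definition inSO (rho : F) (g : 'M[F]_n) : Prop :=
  \det g = 1 /\ g^T *m Jrho rho *m g = Jrho rho.

Definition upper_unipotent (g : 'M[F]_n) : Prop :=
  (forall i j : 'I_n, (j < i)%N -> g i j = 0) /\ (forall i : 'I_n, g i i = 1).

Definition inU (rho : F) (u : 'M[F]_n) : Prop := inSO rho u /\ upper_unipotent u.

(* sum_{i=1}^{l-2} u_{i,i+1} + 1/2 u_{l-1,l+1}  (1-based indices) *)
Definition gen_arg (u : 'M[F]_n) : F :=
  \sum_(i < n) \sum_(j < n | ((i < l - 2)%N && (j == i.+1 :> nat))) u i j
  + 2^-1 * \sum_(i < n) \sum_(j < n | ((i == (l - 2)%N :> nat) && (j == l :> nat))) u i j.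

Definition psiU (C : fieldType) (psi : F -> C) (u : 'M[F]_n) : C := psi (gen_arg u).

Definition inK (ord : F -> int) (rho : F) (m : nat) (g : 'M[F]_n) : Prop :=
  inSO rho g /\ forall i j, inPow ord (m%:Z) ((g - 1%:M) i j).

Definition tau (C : fieldType) (psi : F -> C) (w : F) (m : nat) (k : 'M[F]_n) : C :=
  psi (w ^- (2 * m) * gen_arg k).

Definition emat (w : F) (m : nat) : 'M[F]_n :=
  diag_mx (\row_(i < n) (if (i < l)%N then w ^- (2 * m * (l.-1 - i))
                         else w ^+ (2 * m * (i - l)))).

Definition inH ord rho w m (h : 'M[F]_n) : Prop :=
  inK ord rho m (invmx (emat w m) *m h *m emat w m).

Definition psi_m (C : fieldType) (psi : F -> C) w m (h : 'M[F]_n) : C :=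
  tau psi w m (invmx (emat w m) *m h *m emat w m).

Definition inUm ord rho w m (u : 'M[F]_n) : Prop := inU rho u /\ inH ord rho w m u.

Definition loc_const (C : Type) ord rho (P : 'M[F]_n -> Prop) (f : 'M[F]_n -> C) : Prop :=
  exists k : nat, forall u g, P u -> inK ord rho k g -> P (u *m g) -> f (u *m g) = f u.

(* I is the normalized Haar integral  Vol(P)^{-1} \int_P (.) du  on the
   compact open subgroup P, i.e. the normalized left-invariant positive
   linear functional on the (locally constant) functions on P. *)
Definition normalized_haar (C : numFieldType) ord rho (P : 'M[F]_n -> Prop)
  (I : ('M[F]_n -> C) -> C) : Prop :=
  (forall f g a, loc_const ord rho P f -> loc_const ord rho P g ->
      I (fun u => a * f u + g u) = a * I f + I g) /\
  (forall f g, (forall u, P u -> f u = g u) -> I f = I g) /\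
  (forall f x, loc_const ord rho P f -> P x -> I (fun u => f (x *m u)) = I f) /\
  (forall f, loc_const ord rho P f -> (forall u, P u -> 0 <= f u) -> 0 <= I f) /\
  I (fun _ => 1) = 1.

Definition is_smooth_irrep (C : fieldType) (V : lmodType C) ord rho
  (pi : 'M[F]_n -> V -> V) : Prop :=
  (forall g a v v', inSO rho g -> pi g (a *: v + v') = a *: pi g v + pi g v') /\
  (forall v, pi 1%:M v = v) /\
  (forall g h v, inSO rho g -> inSO rho h -> pi (g *m h) v = pi g (pi h v)) /\
  (forall v, exists k : nat, forall g, inK ord rho k g -> pi g v = v) /\
  (exists v : V, v != 0) /\
  (forall S : V -> Prop, S 0 -> (forall a v v', S v -> S v' -> S (a *: v + v')) ->
     (forall g v, inSO rho g -> S v -> S (pi g v)) ->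
     (forall v, S v -> v = 0) \/ (forall v, S v)).

Definition whittaker_functional (C : fieldType) (V : lmodType C) rho
  (psi : F -> C) (pi : 'M[F]_n -> V -> V) (Gamma : V -> C) : Prop :=
  (forall a v v', Gamma (a *: v + v') = a * Gamma v + Gamma v') /\
  (forall u v, inU rho u -> Gamma (pi u v) = psiU psi u * Gamma v) /\
  (exists v, Gamma v != 0).

Definition in_whittaker_model (C : fieldType) (V : lmodType C) rho
  (pi : 'M[F]_n -> V -> V) (Gamma : V -> C) (W : 'M[F]_n -> C) : Prop :=
  exists v : V, forall g, inSO rho g -> W g = Gamma (pi g v).

End SO.

(* Main.v *)
Require Import Defs.
From HB Require Import structures.
From mathcomp Require Import all_boot all_order all_algebra.
From mathcomp Require Import complex reals.
From mathcomp Require Import zify ring.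
From Stdlib Require Import ClassicalEpsilon.
Set Implicit Arguments. Unset Strict Implicit. Unset Printing Implicit Defensive.
Import Order.TTheory GRing.Theory Num.Theory.
Local Open Scope ring_scope.

Lemma ordv1 (F : fieldType) (ord : F -> int) :
  is_discrete_valuation ord -> ord 1 = 0.
Proof.
move=> [hm _]; have := hm 1 1 (oner_neq0 _) (oner_neq0 _).
rewrite mulr1 => h; lia.
Qed.

Lemma ordvV (F : fieldType) (ord : F -> int) x :
  is_discrete_valuation ord -> x != 0 -> ord x^-1 = - ord x.
Proof.
move=> hv hx; have := (proj1 hv) x x^-1 hx (invr_neq0 hx).
rewrite mulfV // (ordv1 hv) => h; lia.
Qed.

Lemma m1neq0 (F : fieldType) : (-1 : F) != 0.
Proof. by rewrite oppr_eq0 oner_neq0. Qed.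

Lemma ordvN (F : fieldType) (ord : F -> int) x :
  is_discrete_valuation ord -> x != 0 -> ord (- x) = ord x.
Proof.
move=> hv hx.
have hm1 : ord (-1) = 0.
  have := (proj1 hv) (-1) (-1) ((m1neq0 F)) ((m1neq0 F)).
  rewrite mulrNN mulr1 (ordv1 hv) => h; lia.
rewrite -mulN1r (proj1 hv) ?hm1 ?add0r //; exact: (m1neq0 F).
Qed.

Lemma inPow_le (F : fieldType) (ord : F -> int) a b x :
  b <= a -> inPow ord a x -> inPow ord b x.
Proof. move=> hba [->|h]; [by left| right; exact: le_trans h]. Qed.

Lemma inPow0 (F : fieldType) (ord : F -> int) a : inPow ord a 0.
Proof. by left. Qed.

Lemma inPow_self (F : fieldType) (ord : F -> int) x : inPow ord (ord x) x.
Proof. by right. Qed.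

Lemma inPow1 (F : fieldType) (ord : F -> int) :
  is_discrete_valuation ord -> inPow ord 0 1.
Proof. by move=> hv; right; rewrite (ordv1 hv). Qed.

Lemma inPow_mul (F : fieldType) (ord : F -> int) a b x y :
  is_discrete_valuation ord -> inPow ord a x -> inPow ord b y -> inPow ord (a + b) (x * y).
Proof.
move=> hv [->|hx]; first by left; rewrite mul0r.
move=> [->|hy]; first by left; rewrite mulr0.
have [->|x0] := eqVneq x 0; first by left; rewrite mul0r.
have [->|y0] := eqVneq y 0; first by left; rewrite mulr0.
right; rewrite (proj1 hv) //; exact: lerD.
Qed.

Lemma inPow_add (F : fieldType) (ord : F -> int) a x y :
  is_discrete_valuation ord -> inPow ord a x -> inPow ord a y -> inPow ord a (x + y).
Proof.
move=> hv [->|hx]; first by rewrite add0r.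
move=> [->|hy]; first by rewrite addr0; right.
have [->|x0] := eqVneq x 0; first by rewrite add0r; right.
have [->|y0] := eqVneq y 0; first by rewrite addr0; right.
have [->|s0] := eqVneq (x + y) 0; first by left.
right; apply: le_trans ((proj1 (proj2 hv)) x y x0 y0 s0).
by rewrite le_min hx hy.
Qed.

Lemma inPow_opp (F : fieldType) (ord : F -> int) a x :
  is_discrete_valuation ord -> inPow ord a x -> inPow ord a (- x).
Proof.
move=> hv [->|hx]; first by left; rewrite oppr0.
have [->|x0] := eqVneq x 0; first by left; rewrite oppr0.
by right; rewrite ordvN.
Qed.

Lemma inPow_sub (F : fieldType) (ord : F -> int) a x y :
  is_discrete_valuation ord -> inPow ord a x -> inPow ord a y -> inPow ord a (x - y).
Proof. by move=> hv hx hy; apply: inPow_add => //; apply: inPow_opp. Qed.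

Lemma inPow_sum (F : fieldType) (ord : F -> int) a (I : Type) (r : seq I) (P : pred I) (f : I -> F) :
  is_discrete_valuation ord -> (forall i, P i -> inPow ord a (f i)) ->
  inPow ord a (\sum_(i <- r | P i) f i).
Proof.
move=> hv h; apply: (big_ind (inPow ord a)); first exact: inPow0.
  by move=> x y; apply: inPow_add.
exact: h.
Qed.

Lemma inPow_prod (F : fieldType) (ord : F -> int) a (I : Type) (r : seq I) (f : I -> F) :
  is_discrete_valuation ord -> (forall i, inPow ord a (f i)) ->
  inPow ord ((size r)%:Z * a) (\prod_(i <- r) f i).
Proof.
move=> hv h; elim: r => [|x r IH]; first by rewrite big_nil mul0r; apply: inPow1.
rewrite big_cons /=.
have -> : ((size r).+1%:Z * a) = a + (size r)%:Z * a by rewrite intS mulrDl mul1r.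
exact: inPow_mul.
Qed.


Lemma seq_lb (T : eqType) (f : T -> int) (r : seq T) :
  exists c, forall x, x \in r -> c <= f x.
Proof.
elim: r => [|y r [c hc]]; first by exists 0.
exists (Num.min (f y) c) => x; rewrite inE => /orP [/eqP ->|hx].
  by rewrite ge_min lexx.
by rewrite ge_min (hc x hx) orbT.
Qed.

Lemma mx_bound (F : fieldType) (ord : F -> int) a b (M : 'M[F]_(a, b)) :
  exists c, forall i j, inPow ord c (M i j).
Proof.
have [c hc] := seq_lb (fun p : 'I_a * 'I_b => ord (M p.1 p.2)) (enum [set: ('I_a * 'I_b)%type]).
exists c => i j; right; apply: (hc (i, j)); by rewrite mem_enum inE.
Qed.

Lemma inPow_sign (F : fieldType) (ord : F -> int) (k : nat) :
  is_discrete_valuation ord -> inPow ord 0 ((-1) ^+ k : F).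
Proof.
move=> hv; rewrite -signr_odd; case: (odd k) => /=.
  by rewrite expr1; apply: inPow_opp => //; apply: inPow1.
by rewrite expr0; apply: inPow1.
Qed.

Lemma inPow_mulmx (F : fieldType) (ord : F -> int) p q r a b
  (A : 'M[F]_(p, q)) (B : 'M[F]_(q, r)) :
  is_discrete_valuation ord ->
  (forall i j, inPow ord a (A i j)) -> (forall i j, inPow ord b (B i j)) ->
  forall i j, inPow ord (a + b) ((A *m B) i j).
Proof.
move=> hv hA hB i j; rewrite mxE; apply: inPow_sum => // k _.
exact: inPow_mul.
Qed.

Lemma inPow_prod_ord (F : fieldType) (ord : F -> int) k a (f : 'I_k -> F) :
  is_discrete_valuation ord -> (forall i, inPow ord a (f i)) ->
  inPow ord (k%:Z * a) (\prod_(i < k) f i).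
Proof.
move=> hv hf; have := @inPow_prod F ord a _ (index_enum 'I_k) f hv hf.
suff -> : size (index_enum 'I_k) = k by [].
by rewrite -[RHS]card_ord cardT enumT.
Qed.

Lemma inPow_det (F : fieldType) (ord : F -> int) k a (M : 'M[F]_k) :
  is_discrete_valuation ord ->
  (forall i j, inPow ord a (M i j)) -> inPow ord (k%:Z * a) (\det M).
Proof.
move=> hv hM; rewrite /determinant; apply: inPow_sum => // s _.
rewrite -[k%:Z * a]add0r; apply: inPow_mul => //; first exact: inPow_sign.
exact: inPow_prod_ord.
Qed.

Lemma inPow_adj (F : fieldType) (ord : F -> int) k a (M : 'M[F]_k) :
  is_discrete_valuation ord ->
  (forall i j, inPow ord a (M i j)) -> forall i j, inPow ord ((k.-1)%:Z * a) (\adj M i j).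
Proof.
move=> hv hM i j; rewrite mxE /cofactor -[_ * a]add0r; apply: inPow_mul => //.
  exact: inPow_sign.
by apply: inPow_det => // i' j'; rewrite !mxE.
Qed.


Lemma ord_expz (F : fieldType) (ord : F -> int) (w : F) :
  is_discrete_valuation ord -> uniformizer ord w -> forall z : int, ord (w ^ z) = z.
Proof.
move=> hv [w0 w1].
have hn : forall n : nat, ord (w ^+ n) = n%:Z.
  elim=> [|n IH]; first by rewrite expr0 (ordv1 hv).
  rewrite exprS (proj1 hv) ?w1 ?IH ?expf_neq0 //; lia.
case=> n /=; first by rewrite hn.
rewrite NegzE. idtac. 
rewrite -exprnN ordvV ?expf_neq0 // hn; lia.
Qed.

Lemma approx (F : fieldType) (ord : F -> int) (w : F) :
  is_discrete_valuation ord -> finite_residue_field ord -> uniformizer ord w ->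
  forall (B : int) (d : nat), exists Rep : seq F,
    forall x, inPow ord B x -> exists2 r, r \in Rep & inPow ord (B + d%:Z) (x - r).
Proof.
move=> hv [s [hs1 hs2]] hw B; elim=> [|d [Rep hR]].
  exists [:: 0] => x hx; exists 0; first by rewrite inE.
  by rewrite (_ : x - 0 = x) // subr0.
set N := B + d%:Z.
have w0 : w != 0 by case: hw.
exists [seq r + t * w ^ N | r <- Rep, t <- s] => x hx.
have [r hr hxr] := hR x hx.
set y := (x - r) * w ^ (- N).
have hy : inO ord y.
  rewrite /inO /y -(subrr N); apply: inPow_mul => //.
  by rewrite -{1}(ord_expz hv hw (- N)); apply: inPow_self.
have [t ht hyt] := hs2 y hy.
exists (r + t * w ^ N); first by apply/allpairsP; exists (r, t).
have -> : x - (r + t * w ^ N) = (y - t) * w ^ N.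
  rewrite /y mulrBl -mulrA -expfzDr // addNr expr0z mulr1; ring.
have -> : B + (d.+1)%:Z = 1 + N by rewrite /N; lia.
apply: inPow_mul => //.
have := inPow_self ord (w ^ N); by rewrite (ord_expz hv hw N).
Qed.


Lemma gen_arg_sub (F : fieldType) (l : nat) (A B : 'M[F]_(l.*2)) :
  gen_arg A - gen_arg B = gen_arg (A - B).
Proof.
rewrite /gen_arg.
have E : forall (P : 'I_(l.*2) -> 'I_(l.*2) -> bool),
  \sum_(i < l.*2) \sum_(j < l.*2 | P i j) (A - B) i j =
  \sum_(i < l.*2) \sum_(j < l.*2 | P i j) A i j - \sum_(i < l.*2) \sum_(j < l.*2 | P i j) B i j.
  move=> P; rewrite -sumrB; apply: eq_bigr => i _; rewrite -sumrB.
  by apply: eq_bigr => j _; rewrite !mxE.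
rewrite !E; ring.
Qed.

Lemma gen_arg_bound (F : fieldType) (ord : F -> int) (l : nat) N (D : 'M[F]_(l.*2)) :
  is_discrete_valuation ord -> (forall i j, inPow ord N (D i j)) ->
  inPow ord (N + Num.min 0 (ord (2^-1))) (gen_arg D).
Proof.
move=> hv hD; rewrite /gen_arg; apply: inPow_add => //.
  apply: (@inPow_le _ _ N); first by rewrite gerDl ge_min lexx.
  by apply: inPow_sum => // i _; apply: inPow_sum => // j _.
rewrite addrC; apply: inPow_mul => //.
  apply: (@inPow_le _ _ (ord 2^-1)); first by rewrite ge_min lexx orbT.
  exact: inPow_self.
by apply: inPow_sum => // i _; apply: inPow_sum => // j _.
Qed.

Lemma psi_eq (F : fieldType) (ord : F -> int) (C : fieldType) (psi : F -> C) x y :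
  unram_add_char ord psi -> inO ord (x - y) -> psi x = psi y.
Proof.
move=> [hadd [hO _]] h.
rewrite -(subrK y x) hadd.
by rewrite hO // mul1r.
Qed.

Lemma SO_mul (F : fieldType) (l : nat) rho (g h : 'M[F]_(l.*2)) :
  inSO rho g -> inSO rho h -> inSO rho (g *m h).
Proof.
move=> [dg og] [dh oh]; split; first by rewrite det_mulmx dg dh mulr1.
rewrite trmx_mul; have -> : h^T *m g^T *m Jrho l rho *m (g *m h) = h^T *m (g^T *m Jrho l rho *m g) *m h by rewrite !mulmxA.
by rewrite og oh.
Qed.

Lemma SO_unit (F : fieldType) (l : nat) rho (g : 'M[F]_(l.*2)) :
  inSO rho g -> g \in unitmx.
Proof. by move=> [dg _]; rewrite unitmxE dg unitr1. Qed.

Lemma SO_invE (F : fieldType) (l : nat) rho (g : 'M[F]_(l.*2)) :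
  inSO rho g -> invmx g = \adj g.
Proof. by move=> hg; rewrite /invmx (SO_unit hg) (proj1 hg) invr1 scale1r. Qed.

Lemma SO_inv (F : fieldType) (l : nat) rho (g : 'M[F]_(l.*2)) :
  inSO rho g -> inSO rho (invmx g).
Proof.
move=> hg; have gu := SO_unit hg; case: hg => [dg og]; split.
  by rewrite det_inv dg invr1.
have h1 : (invmx g)^T *m g^T = 1%:M by rewrite -trmx_mul mulmxV // trmx1.
rewrite -{1}og.
have -> : (invmx g)^T *m (g^T *m Jrho l rho *m g) *m invmx g =
  ((invmx g)^T *m g^T) *m Jrho l rho *m (g *m invmx g) by rewrite !mulmxA.
by rewrite h1 mulmxV // mul1mx mulmx1.
Qed.

Lemma emat_unit (F : fieldType) (l : nat) (w : F) m :
  w != 0 -> emat l w m \in unitmx.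
Proof.
move=> w0; rewrite unitmxE det_diag unitfE; apply/prodf_neq0 => i _.
rewrite mxE; case: ifP => _; last exact: expf_neq0.
by rewrite invr_eq0 expf_neq0.
Qed.

Lemma lin0 (K : pzRingType) (V X : lmodType K) (f : V -> X) :
  (forall a v v', f (a *: v + v') = a *: f v + f v') -> f 0 = 0.
Proof.
move=> h; have := h 1 0 0; rewrite !scale1r addr0 => E.
by apply: (@addrI _ (f 0)); rewrite -E addr0.
Qed.

Lemma lin_sum (K : pzRingType) (V X : lmodType K) (f : V -> X) (I : Type) (r : seq I) (c : I -> K) (x : I -> V) :
  (forall a v v', f (a *: v + v') = a *: f v + f v') ->
  f (\sum_(i <- r) c i *: x i) = \sum_(i <- r) c i *: f (x i).
Proof.
move=> h; elim: r => [|y r IH]; first by rewrite !big_nil (lin0 h).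
by rewrite !big_cons h IH.
Qed.

Lemma linC_sum (K : pzRingType) (V : lmodType K) (f : V -> K) (I : Type) (r : seq I) (c : I -> K) (x : I -> V) :
  (forall a v v', f (a *: v + v') = a * f v + f v') ->
  f (\sum_(i <- r) c i *: x i) = \sum_(i <- r) c i * f (x i).
Proof.
move=> h.
have f0 : f 0 = 0.
  have := h 1 0 0; rewrite !scale1r addr0 mul1r => E.
  by apply: (@addrI _ (f 0)); rewrite -E addr0.
elim: r => [|y r IH]; first by rewrite !big_nil f0.
by rewrite !big_cons h IH.
Qed.

Lemma sum_ind (C : pzRingType) (T : eqType) (G : T -> C) (r : seq T) x :
  uniq r -> \sum_(s <- r) G s * (x == s)%:R = if x \in r then G x else 0.
Proof.
elim: r => [|y r IH]; first by rewrite big_nil.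
rewrite /= big_cons inE => /andP [yr ur]; rewrite IH //.
have [->|xy] := eqVneq x y; first by rewrite (negbTE yr) mulr1 addr0.
by rewrite mulr0 add0r.
Qed.

Lemma haar_finite (C : pzRingType) (M : Type) (P : M -> Prop) (lc : (M -> C) -> Prop)
  (Im : (M -> C) -> C) (T : eqType) (phi : M -> T) (Vals : seq T) :
  (forall f g a, lc f -> lc g -> Im (fun u => a * f u + g u) = a * Im f + Im g) ->
  (forall f g, (forall u, P u -> f u = g u) -> Im f = Im g) ->
  (forall H : T -> C, lc (fun u => H (phi u))) ->
  (forall u, P u -> phi u \in Vals) ->
  forall G : T -> C, Im (fun u => G (phi u)) =
    \sum_(s <- undup Vals) G s * Im (fun u => (phi u == s)%:R).
Proof.
move=> hlin hcong hlc hV G.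
have I0 : Im (fun _ => 0) = 0.
  have := hlin (fun _ => 0) (fun _ => 0) 1 (hlc (fun _ => 0)) (hlc (fun _ => 0)).
  rewrite !mul1r (hcong _ (fun _ => 0)); last by move=> u _; rewrite ?mul1r ?mulr0 ?addr0.
  by move=> E; apply: (@addrI _ (Im (fun _ => 0))); rewrite -E addr0.
rewrite (hcong _ (fun u => \sum_(s <- undup Vals) G s * (phi u == s)%:R)); last first.
  by move=> u Pu; rewrite sum_ind ?undup_uniq // mem_undup hV.
elim: (undup Vals) => [|y r IH].
  rewrite big_nil (hcong _ (fun _ => 0)) //; by move=> u _; rewrite big_nil.
rewrite big_cons -IH.
rewrite -(hlin _ _ _ (hlc (fun t => (t == y)%:R)) (hlc (fun t => \sum_(s <- r) G s * (t == s)%:R))).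
by apply: hcong => u _; rewrite big_cons.
Qed.


Lemma mxsubE (F : fieldType) p q (A B : 'M[F]_(p, q)) i j : (A - B) i j = A i j - B i j.
Proof. by rewrite !mxE. Qed.

Theorem lemma4p3 (R : realType) (F : fieldType) (ord : F -> int)
  (w rho : F) (psi : F -> R[i]) (l : nat)
  (V : lmodType R[i]) (pi : 'M[F]_(l.*2) -> V -> V) (Gamma : V -> R[i])
  (W : 'M[F]_(l.*2) -> R[i]) (m : nat)
  (Im : ('M[F]_(l.*2) -> R[i]) -> R[i]) :
  nonarch_local_field_char0 ord ->
  uniformizer ord w ->
  unram_add_char ord psi ->
  nonsquare rho ->
  (2 <= l)%N ->
  is_smooth_irrep ord rho pi ->
  whittaker_functional rho psi pi Gamma ->
  in_whittaker_model rho pi Gamma W ->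
  W 1%:M = 1 ->
  (1 <= m)%N ->
  normalized_haar ord rho (inUm ord rho w m) Im ->
  in_whittaker_model rho pi Gamma
    (fun g => Im (fun u => (psi_m psi w m u)^-1 * W (g *m u))).
Proof.
move=> [hv [hres _]] hw hpsi hrho hl [piLin [pi1 [piMul [piSm _]]]] [GLin [GU _]]
  [v0 hv0] W1 hm [IL [IC [II [IP I1]]]].
pose P := @inUm F l ord rho w m.
pose e := @emat F l w m.
have w0 : w != 0 by case: hw.
have eu : e \in unitmx by apply: emat_unit.
have [bE hbE] := mx_bound ord e.
have [bEi hbEi] := mx_bound ord (invmx e).
set Bu := bE + 0 + bEi.
have hPu : forall u, P u -> forall i j, inPow ord Bu (u i j).
  move=> u [_ hH] i j.
  have ub : u = e *m (invmx e *m u *m e) *m invmx e.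
    by rewrite !mulmxA mulmxV // mul1mx mulmxK.
  have hb : forall i j, inPow ord 0 ((invmx e *m u *m e) i j).
    move=> i' j'; set b := invmx e *m u *m e.
    have -> : b i' j' = (b - 1%:M) i' j' + (1%:M : 'M[F]_(l.*2)) i' j' by rewrite mxsubE subrK.
    apply: inPow_add => //.
      by apply: (@inPow_le _ _ (m%:Z)) => //; apply: (proj2 hH).
    rewrite mxE; case: (i' == j'); [exact: inPow1 | exact: inPow0].
  rewrite ub; apply: inPow_mulmx => //; apply: inPow_mulmx => //.
have hinv : forall u, P u -> forall i j, inPow ord ((l.*2).-1%:Z * Bu) (invmx u i j).
  move=> u Pu; rewrite (SO_invE Pu.1.1); apply: inPow_adj => //; exact: hPu.
have [k0 hk0] := piSm v0.
set c2 := Num.min 0 (ord (2^-1 : F)).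
set cw := ord (w ^- (2 * m)).
set X := ((l.*2).-1)%:Z * Bu.
pose N0 := Num.max (k0%:Z - X) (- (bEi + bE + c2 + cw)).
have hN1 : k0%:Z - X <= N0 by rewrite le_max lexx.
have hN2 : - (bEi + bE + c2 + cw) <= N0 by rewrite le_max lexx orbT.
pose phi (u : 'M[F]_(l.*2)) := (psi_m psi w m u, pi u v0).
have hC : forall u u', P u -> P u' -> (forall i j, inPow ord N0 (u' i j - u i j)) ->
    phi u' = phi u.
  move=> u u' Pu Pu' hd.
  have uSO : inSO rho u := Pu.1.1.
  have u'SO : inSO rho u' := Pu'.1.1.
  rewrite /phi; congr pair.
    rewrite /psi_m /tau; apply: (psi_eq hpsi).
    rewrite -mulrBr gen_arg_sub -mulmxBl -mulmxBr.
    apply: (@inPow_le _ _ (cw + ((bEi + N0 + bE) + c2))); first by lia.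
    apply: inPow_mul => //; first exact: inPow_self.
    apply: gen_arg_bound => //; apply: inPow_mulmx => //; apply: inPow_mulmx => //.
    by move=> i j; rewrite mxsubE.
  pose g := invmx u *m u'.
  have gSO : inSO rho g := SO_mul (SO_inv uSO) u'SO.
  have hg : inK ord rho k0 g.
    split => // i j.
    have -> : g - 1%:M = invmx u *m (u' - u) by rewrite mulmxBr mulVmx // (SO_unit uSO).
    apply: (@inPow_le _ _ (X + N0)); first by lia.
    apply: inPow_mulmx => //; first exact: hinv.
    by move=> i' j'; rewrite mxsubE.
  have e' : u *m g = u' by rewrite /g mulKVmx // (SO_unit uSO).
  by rewrite -e' piMul // hk0.
set d := absz (N0 - Bu).
have hd : N0 <= Bu + d%:Z by have := lez_abs (N0 - Bu); lia.
have hA : forall u g, P u -> inK ord rho d g -> P (u *m g) -> phi (u *m g) = phi u.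
  move=> u g Pu [gSO hg] Pug; apply: hC => // i j.
  have -> : (u *m g) i j - u i j = (u *m (g - 1%:M)) i j by rewrite mulmxBr mulmx1 mxsubE.
  apply: (@inPow_le _ _ (Bu + d%:Z)) => //.
  by apply: inPow_mulmx => //; exact: hPu.
have hlc : forall H : (R[i] * V)%type -> R[i], loc_const ord rho P (fun u => H (phi u)).
  by move=> H; exists d => u g Pu hg Pug; rewrite hA.
have hB : exists Vals : seq (R[i] * V)%type, forall u, P u -> phi u \in Vals.
  have [Rep hRep] := approx hv hres hw Bu d.
  pose T := {ffun ('I_(l.*2) * 'I_(l.*2))%type -> 'I_(size Rep)}.
  pose close (t : T) (u : 'M[F]_(l.*2)) :=
    forall i j, inPow ord N0 (u i j - nth 0 Rep (t (i, j))).
  pose sel (t : T) := epsilon (inhabits (1%:M : 'M[F]_(l.*2))) (fun u => P u /\ close t u).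
  exists [seq phi (sel t) | t <- enum T] => u Pu.
  have hex : forall p : ('I_(l.*2) * 'I_(l.*2))%type,
      exists idx : 'I_(size Rep), inPow ord N0 (u p.1 p.2 - nth 0 Rep idx).
    move=> [i j]; have [r rin hr] := hRep _ (hPu u Pu i j).
    have hi : (index r Rep < size Rep)%N by rewrite index_mem.
    exists (Ordinal hi) => /=; rewrite nth_index //.
    exact: (@inPow_le _ _ (Bu + d%:Z)).
  pose f p := proj1_sig (constructive_indefinite_description _ (hex p)).
  pose t : T := [ffun p => f p].
  have ct : close t u.
    move=> i j; rewrite ffunE.
    exact: (proj2_sig (constructive_indefinite_description _ (hex (i, j)))).
  have [hs1 hs2] := epsilon_spec (inhabits (1%:M : 'M[F]_(l.*2)))
    (fun u => P u /\ close t u) (ex_intro _ u (conj Pu ct)).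
  rewrite -(hC u (sel t)) //; last first.
    move=> i j; have -> : sel t i j - u i j =
      (sel t i j - nth 0 Rep (t (i, j))) - (u i j - nth 0 Rep (t (i, j))) by ring.
    by apply: inPow_sub.
  by apply: map_f; rewrite mem_enum.
have [Vals hV] := hB.
pose ind s := Im (fun u => (phi u == s)%:R).
exists (\sum_(s <- undup Vals) (ind s * s.1^-1) *: s.2) => g gSO.
rewrite (IC _ (fun u => (fun s => s.1^-1 * Gamma (pi g s.2)) (phi u))); last first.
  move=> u Pu /=; rewrite hv0; last exact: (SO_mul gSO Pu.1.1).
  by rewrite piMul //; exact: Pu.1.1.
apply: eq_trans; first exact: (haar_finite IL IC hlc hV (fun s : (R[i] * V)%type => s.1^-1 * Gamma (pi g s.2))).
rewrite (lin_sum (f := pi g)); last by move=> a v v'; apply: piLin.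
rewrite (linC_sum (f := Gamma)) //.
by apply: eq_bigr => s _ /=; rewrite mulrC mulrA.
Qed.
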